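(* Let $G$ be a $6$-regular graph, $\mathcal S$ a canonical path partition of $G$, and $P$ a path component with end-vertices $o_1,o_2$. Let $x_1,x_2\in V_2$ be path neighbors on $P$, with $x_1$ immediately preceding $x_2$ when $P$ is traversed from $o_1$ to $o_2$. If $x_1$ goes to $o_2$, then $o_2$ is the only vertex that $x_2$ goes to.
   Context: All graphs are finite, simple and undirected. A path partition of $G=(V,E)$ is a set of vertex-disjoint paths (single vertices allowed) covering $V$; its members are components. A component with $t\ge3$ vertices is a cycle component if the subgraph induced on its vertex set has a spanning cycle; a one-vertex component is an isolated vertex; every other component is a path component. A path partition is canonical if (1) it has the minimum number of components among all path partitions of $G$; (2) among those, it has the maximum number of cycle components; (3) it has no isolated vertices. Given a canonical path partition $\mathcal S$ of $G$: two vertices are path neighbors if they are consecutive on a path component. An edge of $G$ is a free edge unless it joins two path neighbors or has both endpoints in the same cycle component. $V_1$ is the set of end-vertices of path components together with all vertices of cycle components. $V_2$ is the set of vertices not in $V_1$ that are joined by a free edge to a vertex of $V_1$. A balanced edge is a free edge with one endpoint in $V_1$ and the other in $V_2$; for $x\in V_2$, $y\in V_1$ we say $x$ goes to $y$ if $xy$ is a balanced edge. *)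

(* Defs.v *)
From mathcomp Require Import all_boot.
Set Implicit Arguments. Unset Strict Implicit. Unset Printing Implicit Defensive.

Section PathPartitions.
Variables (T : finType) (e : rel T).

Definition simple_graph : Prop := symmetric e /\ irreflexive e.

Definition regular (k : nat) : Prop := forall v : T, #|[set w | e v w]| = k.

Definition is_gpath (p : seq T) : bool :=
  if p is x :: q then path e x q else false.

Definition path_partition (S : seq (seq T)) : Prop :=
  all is_gpath S /\ perm_eq (flatten S) (enum T).

(* Cycle component: t >= 3 vertices and the induced subgraph on its vertex
   set has a spanning cycle (some ordering of its vertices is an e-cycle). *)
Definition cycle_comp (p : seq T) : bool :=
  (2 < size p) && has (cycle e) (permutations p).

Definition isolated_comp (p : seq T) : bool := size p == 1.

Definition path_comp (p : seq T) : bool :=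
  ~~ cycle_comp p && ~~ isolated_comp p.

Definition canonical (S : seq (seq T)) : Prop :=
  [/\ path_partition S,
      (forall S', path_partition S' -> size S <= size S'),
      (forall S', path_partition S' -> size S' = size S ->
          count cycle_comp S' <= count cycle_comp S) &
      ~~ has isolated_comp S].

Variable S : seq (seq T).

Definition path_nb (u v : T) : Prop :=
  exists p, [/\ p \in S, path_comp p &
     exists a b, p = a ++ u :: v :: b \/ p = a ++ v :: u :: b].

Definition same_cycle_comp (u v : T) : Prop :=
  exists p, [/\ p \in S, cycle_comp p, u \in p & v \in p].

Definition free_edge (u v : T) : Prop :=
  [/\ e u v, ~ path_nb u v & ~ same_cycle_comp u v].

Definition inV1 (v : T) : Prop :=
  (exists p, [/\ p \in S, path_comp p &
      (exists q, p = v :: q) \/ (exists q, p = rcons q v)])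
  \/ (exists p, [/\ p \in S, cycle_comp p & v \in p]).

Definition inV2 (x : T) : Prop :=
  ~ inV1 x /\ exists y, inV1 y /\ free_edge x y.

Definition balanced_edge (u v : T) : Prop :=
  free_edge u v /\ ((inV1 u /\ inV2 v) \/ (inV2 u /\ inV1 v)).

Definition goes_to (x y : T) : Prop :=
  [/\ inV2 x, inV1 y & balanced_edge x y].

End PathPartitions.

(* Main.v *)
Require Import Defs.
From mathcomp Require Import all_boot.
Set Implicit Arguments. Unset Strict Implicit. Unset Printing Implicit Defensive.

Lemma mem_rem_neq (A : eqType) (x y : A) (s : seq A) :
  x \in s -> x != y -> x \in rem y s.
Proof.
move=> xs nxy; case ys: (y \in s); last by rewrite rem_id ?ys.
by move: xs; rewrite (perm_mem (perm_to_rem ys)) inE (negbTE nxy).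
Qed.

Lemma merge (T : finType) (e : rel T) (S : seq (seq T)) P R q0 q r0 r :
  path_partition e S -> P \in S -> R \in S -> R != P ->
  perm_eq (q0 :: q) P -> perm_eq (r0 :: r) R ->
  path e q0 q -> path e r0 r -> e (last q0 q) r0 ->
  exists S', path_partition e S' /\ size S' < size S.
Proof.
move=> [Sall Sperm] PS RS nRP pQ pR hq hr hqr.
have RS' : R \in rem P S by apply: mem_rem_neq.
pose X := rem R (rem P S).
exists ((q0 :: q ++ r0 :: r) :: X); split; last first.
  have h0 : 0 < size (rem P S) by case: (rem P S) RS'.
  have h2 : 0 < size S by case: (S) PS.
  rewrite /= /X size_rem // prednK // size_rem //; by case: (size S) h2.
split.
  rewrite /= cat_path hq /= hr hqr /=.
  apply/allP => c cX; apply: (allP Sall); by apply: mem_rem (mem_rem cX).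
have h1 : perm_eq S (P :: R :: X).
  apply: perm_trans (perm_to_rem PS) _; by rewrite perm_cons perm_to_rem.
apply: (perm_trans _ Sperm).
rewrite (permPr (perm_flatten h1)).
rewrite /= -cat_cons catA; apply: perm_cat => //; rewrite -cat_cons; exact: perm_cat.
Qed.

Lemma path_rev_sym (T : eqType) (e : rel T) x p : symmetric e ->
  path e x p -> path e (last x p) (rev (belast x p)).
Proof.
move=> sy h; rewrite rev_path; rewrite (@eq_path _ _ e) // => u v; exact: sy.
Qed.

Lemma gpath_rev (T : finType) (e : rel T) p : symmetric e ->
  is_gpath e p -> is_gpath e (rev p).
Proof.
move=> sy; case: p => [//|x q] /= h.
rewrite lastI rev_rcons /=; exact: path_rev_sym.
Qed.

Lemma rev_cons_eq (T : eqType) (x : T) b :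
  rcons (rev b) x = last x b :: rev (belast x b).
Proof. by rewrite -rev_cons lastI rev_rcons. Qed.

Theorem mainTheorem6 (T : finType) (e : rel T) (S : seq (seq T))
    (P Q : seq T) (o1 o2 x1 x2 : T) :
  simple_graph e -> regular e 6 -> canonical e S ->
  P \in S -> path_comp e P ->
  (Q = P \/ Q = rev P) ->
  (exists m, Q = o1 :: rcons m o2) ->
  inV2 e S x1 -> inV2 e S x2 ->
  (exists a b, Q = a ++ x1 :: x2 :: b) ->
  goes_to e S x1 o2 ->
  goes_to e S x2 o2 /\ (forall y, goes_to e S x2 y -> y = o2).
Proof.
move=> [sy irr] _ [Hpp Hmin Hcyc Hiso] PS Pc HQP [m hQm] Hx1 Hx2 [a [b hQ]] Hgo.
have ex1o2 : e x1 o2 by case: Hgo => _ _ [[]].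
have PQ : P = Q \/ P = rev Q by case: HQP => ->; [left | right; rewrite revK].
have pQP : perm_eq Q P by case: HQP => ->; rewrite ?perm_rev.
have gQ : is_gpath e Q.
  have gP : is_gpath e P by apply: (allP Hpp.1).
  by case: HQP => ->; last apply: gpath_rev.
have lastb : last x2 b = o2.
  have := congr1 (last o1) hQ; rewrite hQm last_cat /= last_rcons => <- //.
pose Q' := a ++ x1 :: rcons (rev b) x2.
have pQ' : perm_eq Q' P.
  apply: perm_trans pQP; rewrite hQ /Q'; apply: perm_cat => //.
  by rewrite perm_cons -rev_cons perm_rev.
have [q hq] : exists q, Q' = o1 :: q.
  move: hQ; rewrite hQm /Q'; case: (a) => [|a0 a'] /= [-> h]; by eexists.
have hpq : path e o1 q.
  have : is_gpath e Q' ; last by rewrite hq.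
  move: gQ; rewrite hQ /Q'; case: (a) => [|a0 a'] /=.
    by move=> /andP[_ hb]; rewrite rev_cons_eq /= lastb ex1o2 /= -lastb path_rev_sym.
  rewrite !cat_path /= => /andP[-> /andP[-> /andP[_ hb]]] /=.
  by rewrite rev_cons_eq /= lastb ex1o2 /= -lastb path_rev_sym.
have hlq : last o1 q = x2 by rewrite -[last o1 q]/(last o1 (o1 :: q)) -hq /Q' last_cat /= last_rcons.
have claim : forall y, inV1 e S y -> e x2 y -> y = o2.
  move=> y Hy exy; case: (eqVneq y o2) => // nyo2; exfalso.
  have merge_ok : forall R r, R \in S -> R != P -> perm_eq (y :: r) R -> path e y r -> False.
    move=> R r RS nRP pR hr.
    have hl : e (last o1 q) y by rewrite hlq.
    have pq : perm_eq (o1 :: q) P by rewrite -hq.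
    have [S' [pS' sS']] := merge Hpp PS RS nRP pq pR hpq hr hl.
    by have := Hmin S' pS'; rewrite leqNgt sS'.
  have nPc : ~~ cycle_comp e P by case/andP: Pc.
  case: (eqVneq y o1) => [yo1 | nyo1].
    subst y.
    have cyc : cycle e Q' by rewrite hq /= rcons_path hpq hlq exy.
    have sz : 2 < size Q'.
      move: hQ; rewrite hQm /Q'; case: (a) => [|a0 a'] /=.
        case=> ex _; case: Hx1 => nx _; exfalso; apply: nx; by rewrite -ex.
      by move=> _; rewrite size_cat /= size_rcons !addnS.
    move: nPc; rewrite /cycle_comp -(perm_size pQ') sz /=; apply/negP/negPn.
    by apply/hasP; exists Q' => //; rewrite mem_permutations.
  have Pends : forall R r, R = P -> (R = y :: r \/ R = rcons r y) -> False.
    move=> R r RP hR; subst R.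
    have hh := congr1 (head y) hQm; have hl := congr1 (last y) hQm.
    have hh' := congr1 (head y) (congr1 rev hQm); have hl' := congr1 (last y) (congr1 rev hQm).
    rewrite /= last_rcons in hh hl.
    rewrite rev_cons rev_rcons /= last_rcons in hh' hl'.
    case: PQ hR => -> [] hR; rewrite hR /= ?last_rcons in hh hl hh' hl'.
    - by move/eqP: nyo1; apply; rewrite hh.
    - by move/eqP: nyo2; apply; rewrite hl.
    - by rewrite hh' eqxx in nyo2.
    - by rewrite -hl' eqxx in nyo1.
  case: Hy => [[R [RS Rc [[r hr]|[r hr]]]] | [R [RS Rc yR]]].
  - case: (eqVneq R P) => [RP|nRP]; first by apply: (Pends R r RP); left.
    have g : is_gpath e R by apply: (allP Hpp.1).
    by apply: (merge_ok R r RS nRP); [rewrite hr | move: g; rewrite hr].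
  - case: (eqVneq R P) => [RP|nRP]; first by apply: (Pends R r RP); right.
    have g : is_gpath e (rev R) by apply: gpath_rev => //; apply: (allP Hpp.1).
    apply: (merge_ok R (rev r) RS nRP).
      by rewrite hr -rev_rcons perm_rev.
    by move: g; rewrite hr rev_rcons.
  - have nRP : R != P by apply/eqP => RP; move: nPc; rewrite -RP Rc.
    case/andP: Rc => _ /hasP[c cperm ccyc].
    have yc : y \in c by rewrite (perm_mem (_ : perm_eq c R)) // -mem_permutations.
    case: (rot_to yc) => i c' hrot.
    apply: (merge_ok R c' RS nRP).
      by rewrite -hrot perm_rot -mem_permutations.
    by move: ccyc; rewrite -(rot_cycle i) hrot /= rcons_path => /andP[].
split.
  case: (Hx2) => nx2 [y [Hy fe]].
  have := claim y Hy; case: (fe) => exy _ _ => /(_ exy) yo2; subst y.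
  split => //; split => //; right; split => //.
by move=> y [_ Hy [[exy _ _] _]]; apply: claim.
Qed.
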